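(* In the weighted push-sum setting below, if $\{\mathbb G(t)\}$ is uniformly strongly connected, then the sequence of stochastic matrices $\{S(t)\}$ has a unique absolute probability sequence $\{\pi(t)\}$, given by $\pi_i(t)=y_i(t)$ for all $i\in\mathcal V$ and $t\ge0$.
   Context: Setting. Fix $n$ agents, $\mathcal V=\{1,\dots,n\}$. For each $t\in\{0,1,2,\dots\}$, $\mathbb G(t)=(\mathcal V,\mathcal E(t))$ is a directed graph containing a self-arc $(i,i)$ at every vertex; $\mathcal N_i(t)=\{j:(j,i)\in\mathcal E(t)\}$ and $\mathcal N_i^-(t)=\{k:(i,k)\in\mathcal E(t)\}$. Weights $w_{ij}(t)$ are positive for $j\in\mathcal N_i(t)$ and $w_{ij}(t)=0$ otherwise, and satisfy: there is $\beta>0$ with $w_{ij}(t)\ge\beta$ whenever $j\in\mathcal N_i(t)$, and $\sum_{j\in\mathcal N_i^-(t)}w_{ji}(t)=1$ for all $i,t$. The sequence $\{\mathbb G(t)\}$ is uniformly strongly connected if there is a positive integer $L$ such that for every $t\ge0$ the graph with vertex set $\mathcal V$ and edge set $\bigcup_{k=t}^{t+L-1}\mathcal E(k)$ is strongly connected. Weighted push-sum: each agent knows $c_i>0$ with $\sum_ic_i=1$; $y_i(t+1)=\sum_{j\in\mathcal N_i(t)}w_{ij}(t)y_j(t)$ with $y_i(0)=c_i$. Define the row-stochastic matrix $S(t)$ with entries $s_{ij}(t)=w_{ij}(t)y_j(t)/y_i(t+1)$. Definition: for a sequence $\{S(t)\}_{t\ge0}$ of (row) stochastic matrices, a sequence of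 stochastic vectors $\{\pi(t)\}_{t\ge0}$ (nonnegative entries summing to one) is an absolute probability sequence if $\pi^\top(t)=\pi^\top(t+1)S(t)$ for all $t\ge0$. *)

(* Defs.v *)
From HB Require Import structures.
From mathcomp Require Import all_boot all_order all_algebra.
From mathcomp Require Import reals.
Set Implicit Arguments. Unset Strict Implicit. Unset Printing Implicit Defensive.
Import Order.TTheory GRing.Theory Num.Theory.
Local Open Scope ring_scope.

(* Agents are 'I_n.  A time-varying graph is E : nat -> rel 'I_n,
   with  E t j i  meaning that (j,i) is an arc of G(t) (j -> i).
   Weights are w t i j = w_{ij}(t). *)

Definition in_nbrs n (E : nat -> rel 'I_n) t (i : 'I_n) : pred 'I_n :=
  fun j => E t j i.
Definition out_nbrs n (E : nat -> rel 'I_n) t (i : 'I_n) : pred 'I_n :=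
  fun k => E t i k.

Definition weight_assumptions (R : realType) n (E : nat -> rel 'I_n)
    (w : nat -> 'I_n -> 'I_n -> R) (beta : R) : Prop :=
  0 < beta /\
  (forall t i j, j \in in_nbrs E t i -> 0 < w t i j) /\
  (forall t i j, j \notin in_nbrs E t i -> w t i j = 0) /\
  (forall t i j, j \in in_nbrs E t i -> beta <= w t i j) /\
  (forall t i, \sum_(j | j \in out_nbrs E t i) w t j i = 1).

Definition has_self_arcs n (E : nat -> rel 'I_n) : Prop :=
  forall t (i : 'I_n), E t i i.

Definition union_rel n (E : nat -> rel 'I_n) (t L : nat) : rel 'I_n :=
  fun a b => [exists k : 'I_L, E (t + k)%N a b].

Definition strongly_connected n (e : rel 'I_n) : Prop :=
  forall i j : 'I_n, connect e i j.

Definition uniformly_strongly_connected n (E : nat -> rel 'I_n) : Prop :=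
  exists L : nat, (0 < L)%N /\ forall t, strongly_connected (union_rel E t L).

Fixpoint pushsum (R : realType) n (E : nat -> rel 'I_n)
    (w : nat -> 'I_n -> 'I_n -> R) (c : 'I_n -> R) (t : nat) : 'I_n -> R :=
  match t with
  | 0 => c
  | t'.+1 => fun i => \sum_(j | j \in in_nbrs E t' i) w t' i j * pushsum E w c t' j
  end.

Definition Smat (R : realType) n (E : nat -> rel 'I_n)
    (w : nat -> 'I_n -> 'I_n -> R) (c : 'I_n -> R) (t : nat) (i j : 'I_n) : R :=
  w t i j * pushsum E w c t j / pushsum E w c t.+1 i.

Definition stochastic_vector (R : realType) n (p : 'I_n -> R) : Prop :=
  (forall i, 0 <= p i) /\ \sum_i p i = 1.

Definition abs_prob_seq (R : realType) n (S : nat -> 'I_n -> 'I_n -> R)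
    (pi : nat -> 'I_n -> R) : Prop :=
  (forall t, stochastic_vector (pi t)) /\
  (forall t (j : 'I_n), pi t j = \sum_i pi t.+1 i * S t i j).

(* Main.v *)
Require Import Defs.
From HB Require Import structures.
From mathcomp Require Import all_boot all_order all_algebra.
From mathcomp Require Import reals.
From mathcomp Require Import lra ring zify.
Import Order.TTheory GRing.Theory Num.Theory.
Local Open Scope ring_scope.
Lemma in_nbrsE n (E : nat -> rel 'I_n) t i j : (j \in in_nbrs E t i) = E t j i.
Proof. by []. Qed.
Lemma out_nbrsE n (E : nat -> rel 'I_n) t i j : (j \in out_nbrs E t i) = E t i j.
Proof. by []. Qed.

Lemma exists_max (R : realType) n (i0 : 'I_n) (F : 'I_n -> R) :
  exists i, forall j, F j <= F i.
Proof.
case: (arg_maxP (i0:=i0) (P:=predT) F erefl) => i _ Hi; exists i => j; exact: Hi.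
Qed.

Lemma exists_min (R : realType) n (i0 : 'I_n) (F : 'I_n -> R) :
  exists i, forall j, F i <= F j.
Proof.
case: (@exists_max R n i0 (fun j => - F j)) => i Hi; exists i => j.
by rewrite -lerN2 Hi.
Qed.

Lemma pred_closed_full n (e : rel 'I_n) (A : {set 'I_n}) a0 :
  (forall i j, connect e i j) -> a0 \in A ->
  (forall x y, e x y -> y \in A -> x \in A) -> A = setT.
Proof.
move=> Hc Ha0 Hcl; apply/setP => x; rewrite inE.
case/connectP: (Hc x a0) => p Hp Hl.
elim: p x Hp Hl => [|y p IH] x /=; first by move=> _ Hl; rewrite -Hl.
case/andP => Hxy Hp Hl; apply: (Hcl x y Hxy); exact: IH.
Qed.

Lemma step_le (R : realType) n (E : nat -> rel 'I_n) (w : nat -> 'I_n -> 'I_n -> R) (beta : R)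
 (wge0 : forall t i j, 0 <= w t i j)
 (wcol : forall t j, \sum_i w t i j = 1)
 (wb : forall t i j, E t j i -> beta <= w t i j)
 (hb : 0 < beta)
 (z : nat -> 'I_n -> R) (s : nat) (M h : R) (i j : 'I_n) :
 z s j = \sum_k w s k j * z s.+1 k ->
 (forall k, z s.+1 k <= M) -> E s j i -> z s.+1 i <= M - h -> 0 <= h ->
 z s j <= M - beta * h.
Proof.
move=> Hrec HM He Hi Hh; rewrite Hrec.
have H1 : \sum_k w s k j * (M - z s.+1 k) = M - \sum_k w s k j * z s.+1 k.
  rewrite (eq_bigr (fun k => w s k j * M - w s k j * z s.+1 k)); last by move=> k _; rewrite mulrBr.
  by rewrite sumrB -mulr_suml wcol mul1r.
have H2 : w s i j * (M - z s.+1 i) <= \sum_k w s k j * (M - z s.+1 k).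
  rewrite (bigD1 i) //= lerDl; apply: sumr_ge0 => k _; apply: mulr_ge0; first exact: wge0.
  by rewrite subr_ge0.
have Hw := wb _ _ _ He.
have H3 : beta * h <= w s i j * (M - z s.+1 i).
  apply: ler_pM => //; [exact: ltW | lra].
lra.
Qed.

Lemma core_upper (R : realType) n (E : nat -> rel 'I_n) (w : nat -> 'I_n -> 'I_n -> R) (beta : R) (L : nat)
 (wge0 : forall t i j, 0 <= w t i j)
 (wcol : forall t j, \sum_i w t i j = 1)
 (wb : forall t i j, E t j i -> beta <= w t i j)
 (hb : 0 < beta)
 (self : has_self_arcs E)
 (usc : forall t, strongly_connected (union_rel E t L))
 (z : nat -> 'I_n -> R) (T : nat) (M g : R) (i0 : 'I_n) :
 (n * L <= T)%N ->
 (forall s j, (s < T)%N -> z s j = \sum_i w s i j * z s.+1 i) ->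
 (forall i, z T i <= M) -> z T i0 <= M - g -> 0 <= g ->
 forall j, z (T - n * L)%N j <= M - beta ^+ (n * L) * g.
Proof.
move=> HT Hrec HM Hi0 Hg.
have HMall : forall d i, (d <= T)%N -> z (T - d)%N i <= M.
  elim=> [|d IH] i Hd; first by rewrite subn0.
  rewrite Hrec; last by lia.
  have -> : (T - d.+1).+1 = (T - d)%N by lia.
  have H1 : \sum_k w (T - d.+1)%N k i * z (T - d)%N k <= \sum_k w (T - d.+1)%N k i * M.
    apply: ler_sum => k _; apply: ler_wpM2l; first exact: wge0.
    apply: IH; lia.
  by rewrite -mulr_suml wcol mul1r in H1.
pose A d := [set j | z (T - d)%N j <= M - beta ^+ d * g].
have Hedge : forall d j i, (d < T)%N -> E (T - d.+1)%N j i -> i \in A d -> j \in A d.+1.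
  move=> d j i Hd He; rewrite !inE => Hi.
  have Hs : (T - d.+1).+1 = (T - d)%N by lia.
  have := @step_le R n E w beta wge0 wcol wb hb z (T - d.+1)%N M (beta ^+ d * g) i j.
  rewrite exprS -mulrA Hs; apply => //.
  - by rewrite Hrec ?Hs //; lia.
  - move=> k; apply: HMall; lia.
  - by apply: mulr_ge0 => //; apply: exprn_ge0; apply: ltW.
have Hmono1 : forall d, (d < T)%N -> A d \subset A d.+1.
  move=> d Hd; apply/subsetP => j Hj; apply: (Hedge d j j) => //; exact: self.
have Hmono : forall d1 d2, (d1 <= d2)%N -> (d2 <= T)%N -> A d1 \subset A d2.
  move=> d1; elim=> [|d2 IH] H12 H2.
    by have -> : d1 = 0%N by lia.
  case: (ltngtP d1 d2.+1) => H; last by rewrite H.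
    apply: subset_trans (IH _ _) (Hmono1 _ _); lia.
  lia.
have Hwin : forall k a b, (k.+1 * L <= T)%N -> union_rel E (T - k.+1 * L) L a b ->
    b \in A (k * L)%N -> a \in A (k.+1 * L)%N.
  move=> k a b Hk /existsP [l Hl] Hb.
  have Hl' := ltn_ord l.
  pose d := (k.+1 * L - l)%N.
  have Hd1 : (k * L <= d.-1)%N by rewrite /d; rewrite mulSn in Hk *; lia.
  have Hd2 : (d.-1 < T)%N by rewrite /d; rewrite mulSn in Hk *; lia.
  have Hb' : b \in A d.-1 by apply: (subsetP (Hmono _ _ Hd1 (ltnW Hd2))).
  have Ht : (T - k.+1 * L + l)%N = (T - d.-1.+1)%N by rewrite /d; rewrite mulSn in Hk *; lia.
  rewrite Ht in Hl.
  have Ha := Hedge _ _ _ Hd2 Hl Hb'.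
  apply: (subsetP (Hmono _ _ _ _)) Ha; rewrite /d; rewrite mulSn in Hk *; lia.
have Hcount : forall k, (k * L <= T)%N -> (k < #|A (k * L)%N|)%N || (A (k * L)%N == setT).
  elim=> [|k IH] Hk.
    apply/orP; left; apply/card_gt0P; exists i0; by rewrite mul0n inE subn0 expr0 mul1r.
  have Hk' : (k * L <= T)%N by rewrite mulSn in Hk; lia.
  have Hsub : A (k * L)%N \subset A (k.+1 * L)%N by apply: Hmono => //; rewrite mulSn; lia.
  case/orP: (IH Hk') => [Hc|/eqP Hf].
    case: (boolP (A (k * L)%N == setT)) => [/eqP Hf|Hnf].
      apply/orP; right; rewrite eqEsubset subsetT /=; rewrite -Hf; exact: Hsub.
    apply/orP; left.
    have Hpr : A (k * L)%N \proper A (k.+1 * L)%N.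
      rewrite properE Hsub /=; apply/negP => Hsub2.
      move/negP: Hnf; apply; apply/eqP.
      have [a0 Ha0] : exists a0, a0 \in A (k * L)%N.
        by apply/card_gt0P; exact: leq_ltn_trans (leq0n k) Hc.
      apply: (@pred_closed_full _ _ _ _ (usc (T - k.+1 * L)%N) Ha0) => x y Hxy Hy.
      exact: (subsetP Hsub2) (Hwin _ _ _ Hk Hxy Hy).
    have := proper_card Hpr; lia.
  apply/orP; right; rewrite eqEsubset subsetT /= -Hf; exact: Hsub.
move=> j.
have := Hcount n HT; case/orP => [Hc|/eqP Hf].
  have H := max_card (A (n * L)%N); rewrite card_ord in H; by rewrite ltnNge H in Hc.
have : j \in A (n * L)%N by rewrite Hf inE.
by rewrite inE.
Qed.

Lemma core_spread (R : realType) n (E : nat -> rel 'I_n) (w : nat -> 'I_n -> 'I_n -> R) (beta : R) (L : nat)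
 (wge0 : forall t i j, 0 <= w t i j)
 (wcol : forall t j, \sum_i w t i j = 1)
 (wb : forall t i j, E t j i -> beta <= w t i j)
 (hb : 0 < beta) (hb1 : beta <= 1)
 (self : has_self_arcs E)
 (usc : forall t, strongly_connected (union_rel E t L))
 (z : nat -> 'I_n -> R) (T : nat) (B : R) (i0 : 'I_n) :
 (n * L <= T)%N ->
 (forall s j, (s < T)%N -> z s j = \sum_i w s i j * z s.+1 i) ->
 (forall i i', z T i - z T i' <= B) ->
 forall j j', z (T - n * L)%N j - z (T - n * L)%N j' <= (1 - beta ^+ (n * L)) * B.
Proof.
move=> HT Hrec HB j j'.
have [imax Hmax] := @exists_max R n i0 (z T).
have [imin Hmin] := @exists_min R n i0 (z T).
set M := z T imax; set m := z T imin.
have Hg : 0 <= M - m by rewrite subr_ge0; apply: Hmin.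
have Hup := @core_upper R n E w beta L wge0 wcol wb hb self usc z T M (M - m) imin HT Hrec Hmax
   ltac:(rewrite /m; lra) Hg j.
have Hrec' : forall s j, (s < T)%N -> - z s j = \sum_i w s i j * - z s.+1 i.
  move=> s k Hs; rewrite Hrec // -sumrN; apply: eq_bigr => i _; by rewrite mulrN.
have Hlo := @core_upper R n E w beta L wge0 wcol wb hb self usc (fun s i => - z s i) T (- m) (M - m) imax HT Hrec'
   ltac:(move=> i /=; rewrite lerN2; exact: Hmin) ltac:(rewrite /M /=; lra) Hg j'.
simpl in Hlo.
have Hd0 : 0 <= beta ^+ (n * L) by apply: exprn_ge0; exact: ltW.
have Hd1 : beta ^+ (n * L) <= 1 by apply: exprn_ile1 => //; exact: ltW.
have HMB : M - m <= B by exact: HB.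
nra.
Qed.

Fixpoint back (R : realType) n (w : nat -> 'I_n -> 'I_n -> R) (T : nat) (v : 'I_n -> R) (d : nat)
  : 'I_n -> R :=
  match d with
  | 0 => v
  | d'.+1 => fun j => \sum_i w (T - d'.+1)%N i j * back R n w T v d' i
  end.
Arguments back {R n}.

Lemma back_rec (R : realType) n (w : nat -> 'I_n -> 'I_n -> R) T v s j :
  (s < T)%N -> back w T v (T - s) j = \sum_i w s i j * back w T v (T - s.+1) i.
Proof.
move=> Hs; have -> : (T - s = (T - s.+1).+1)%N by lia.
rewrite /=; have -> : (T - (T - s.+1).+1 = s)%N by lia.
by [].
Qed.

Lemma pushsum_S (R : realType) n (E : nat -> rel 'I_n) (w : nat -> 'I_n -> 'I_n -> R) c t i :
  (forall t i j, j \notin in_nbrs E t i -> w t i j = 0) ->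
  pushsum E w c t.+1 i = \sum_j w t i j * pushsum E w c t j.
Proof.
move=> Hz; rewrite /= big_mkcond; apply: eq_bigr => j _.
by case: ifP => // /negbT H; rewrite Hz // mul0r.
Qed.

Lemma duality (R : realType) n (E : nat -> rel 'I_n) (w : nat -> 'I_n -> 'I_n -> R) c
  (Hz : forall t i j, j \notin in_nbrs E t i -> w t i j = 0)
  (z : nat -> 'I_n -> R) s :
  (forall j, z s j = \sum_i w s i j * z s.+1 i) ->
  \sum_j z s j * pushsum E w c s j = \sum_i z s.+1 i * pushsum E w c s.+1 i.
Proof.
move=> Hrec.
rewrite (eq_bigr (fun j => \sum_i w s i j * z s.+1 i * pushsum E w c s j)); last first.
  by move=> j _; rewrite Hrec mulr_suml.
rewrite exchange_big; apply: eq_bigr => i _; rewrite pushsum_S // mulr_sumr.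
by apply: eq_bigr => j _; ring.
Qed.

Lemma bernoulli_contra (R : realType) (d x : R) :
  0 < d -> d <= 1 -> (forall k, d * x <= (1 - d) ^+ k) -> x <= 0.
Proof.
move=> Hd Hd1 Hk.
have Hb : forall k : nat, (1 - d) ^+ k * (1 + k%:R * d) <= 1.
  elim=> [|k IH]; first by rewrite expr0 mul0r addr0 mulr1.
  have Hp : 0 <= (1 - d) ^+ k by apply: exprn_ge0; lra.
  rewrite exprS -natr1.
  have : (1 - d) * (1 + (k%:R + 1) * d) <= 1 + k%:R * d.
    have : 0 <= k%:R :> R by exact: ler0n.
    nra.
  move=> H; nra.
rewrite leNgt; apply/negP => Hx.
set y := (d * d * x)^-1.
have Hy : 0 <= y by rewrite /y invr_ge0; apply: ltW; apply: mulr_gt0 => //; exact: mulr_gt0.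
have Ha := archi_boundP Hy.
set N := Num.Def.archi_bound y in Ha.
have H1 := Hk N; have H2 := Hb N.
have Hp : 0 <= (1 - d) ^+ N by apply: exprn_ge0; lra.
have Hdx : 0 < d * d * x by apply: mulr_gt0 => //; exact: mulr_gt0.
have H3 : 1 < N%:R * (d * d * x).
  by rewrite /y -ltr_pdivrMr // div1r.
have HN : 0 <= N%:R :> R by exact: ler0n.
have H4 : d * x * (1 + N%:R * d) <= (1 - d) ^+ N * (1 + N%:R * d).
  apply: ler_wpM2r => //; nra.
have H5 : 0 < d * x by apply: mulr_gt0.
have E1 : N%:R * (d * d * x) = (d * x) * (N%:R * d) by ring.
rewrite E1 in H3.
nra.
Qed.

Theorem proposition5 (R : realType) (n : nat) (E : nat -> rel 'I_n)
    (w : nat -> 'I_n -> 'I_n -> R) (beta : R) (c : 'I_n -> R) :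
  has_self_arcs E ->
  weight_assumptions E w beta ->
  (forall i, 0 < c i) -> \sum_i c i = 1 ->
  uniformly_strongly_connected E ->
  abs_prob_seq (Smat E w c) (pushsum E w c) /\
  (forall pi : nat -> 'I_n -> R, abs_prob_seq (Smat E w c) pi ->
     forall t i, pi t i = pushsum E w c t i).
Proof.
move=> Hself [Hb [Hpos [Hz [Hwb Hout]]]] Hc Hc1 [L [HL Husc]].
have [i0 _] : exists i0 : 'I_n, True.
  case: (posnP n) => Hn; last by exists (Ordinal Hn).
  subst n; move: Hc1; rewrite big_ord0 => /eqP; by rewrite eq_sym oner_eq0.
have wge0 : forall t i j, 0 <= w t i j.
  move=> t i j; case: (boolP (j \in in_nbrs E t i)) => H; first exact: ltW (Hpos _ _ _ H).
  by rewrite Hz.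
have wcol : forall t j, \sum_i w t i j = 1.
  move=> t j; rewrite -(Hout t j) [RHS]big_mkcond /=; apply: eq_bigr => i _.
  case: ifP => // /negbT H; apply: Hz; by rewrite in_nbrsE; rewrite out_nbrsE in H.
have wb : forall t i j, E t j i -> beta <= w t i j.
  by move=> t i j H; apply: Hwb; rewrite in_nbrsE.
have hb1 : beta <= 1.
  have H1 := wb 0%N i0 i0 (Hself 0%N i0).
  have H2 : w 0%N i0 i0 <= \sum_i w 0%N i i0.
    rewrite (bigD1 i0) //= lerDl; apply: sumr_ge0 => k _; exact: wge0.
  rewrite wcol in H2; lra.
set y := pushsum E w c.
have ypos : forall t i, 0 < y t i.
  elim=> [|t IH] i; first exact: Hc.
  rewrite /y pushsum_S // (bigD1 i) //=.
  have H1 : 0 < w t i i * y t i by apply: mulr_gt0; [apply: Hpos; rewrite in_nbrsE; exact: Hself | exact: IH].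
  have H2 : 0 <= \sum_(j | j != i) w t i j * pushsum E w c t j.
    apply: sumr_ge0 => k _; apply: mulr_ge0; [exact: wge0 | exact: ltW (IH k)].
  rewrite /y in H1; lra.
have ysum : forall t, \sum_i y t i = 1.
  elim=> [|t IH]; first exact: Hc1.
  rewrite /y; under eq_bigr do rewrite pushsum_S //.
  rewrite exchange_big /= -IH; apply: eq_bigr => j _.
  by rewrite -mulr_suml wcol mul1r.
have yne0 : forall t i, y t i != 0 by move=> t i; exact: lt0r_neq0 (ypos t i).
split.
  split; first by move=> t; split; [move=> i; exact: ltW (ypos t i) | exact: ysum].
  move=> t j; rewrite /Smat; symmetry.
  rewrite (eq_bigr (fun i => w t i j * y t j)); last first.
    by move=> i _; rewrite mulrC divfK // yne0.
  by rewrite -mulr_suml wcol mul1r.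
set K := (n * L)%N.
set del := beta ^+ K.
have Hd0 : 0 < del by apply: exprn_gt0.
have Hd1 : del <= 1 by apply: exprn_ile1 => //; exact: ltW.
have ylow : forall T i, (K <= T)%N -> del <= y T i.
  move=> T i HT.
  pose v := fun k : 'I_n => if k == i then 0 else 1 : R.
  pose z := fun s => back w T v (T - s).
  have Hrec : forall s j, (s < T)%N -> z s j = \sum_i w s i j * z s.+1 i.
    by move=> s j Hs; rewrite /z back_rec.
  have HzT : z T = v by rewrite /z subnn.
  have Hv : forall k, z T k <= 1 by move=> k; rewrite HzT /v; case: ifP => _; lra.
  have Hvi : z T i <= 1 - 1 by rewrite HzT /v eqxx; lra.
  have Hcore := @core_upper R n E w beta L wge0 wcol wb Hb Hself Husc z T 1 1 i HT Hrec Hv Hvi ler01.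
  have Hdual : forall d, (d <= T)%N ->
      \sum_j z (T - d)%N j * y (T - d)%N j = \sum_j z T j * y T j.
    elim=> [|d IH] Hd; first by rewrite subn0.
    have Hs : (T - d.+1).+1 = (T - d)%N by lia.
    rewrite /y (@duality R n E w c Hz z (T - d.+1)%N).
      rewrite Hs; apply: IH; lia.
    move=> j; rewrite Hrec ?Hs //; lia.
  have HR : \sum_j z T j * y T j = 1 - y T i.
    rewrite HzT -(ysum T) (bigD1 i) //= [X in _ = X - _](bigD1 i) //= /v eqxx mul0r add0r.
    have -> : \sum_(j | j != i) (if j == i then 0 else 1) * y T j = \sum_(j | j != i) y T j.
      by apply: eq_bigr => j /negbTE ->; rewrite mul1r.
    lra.
  have HL1 : \sum_j z (T - K)%N j * y (T - K)%N j <= \sum_j (1 - del) * y (T - K)%N j.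
    apply: ler_sum => j _; apply: ler_wpM2r; first exact: ltW (ypos _ _).
    have := Hcore j; rewrite mulr1 //.
  rewrite -mulr_sumr ysum mulr1 Hdual // HR in HL1.
  lra.
move=> pi [Hst Hrel] t0 i.
pose z := fun s k => pi s k / y s k.
have Hzrec : forall s j, z s j = \sum_i w s i j * z s.+1 i.
  move=> s j; rewrite /z Hrel mulr_suml; apply: eq_bigr => k _; rewrite /Smat.
  have h1 := yne0 s j; have h2 := yne0 s.+1 k; rewrite /y in h1 h2 *.
  by field; rewrite h1 h2.
have Hzy : forall s k, z s k * y s k = pi s k by move=> s k; rewrite /z divfK.
have Hz0 : forall s k, 0 <= z s k.
  move=> s k; apply: divr_ge0; [exact: (Hst s).1 | exact: ltW (ypos _ _)].
have Hpi1 : forall s k, pi s k <= 1.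
  move=> s k; case: (Hst s) => H0 H1; rewrite -H1 (bigD1 k) //= lerDl.
  by apply: sumr_ge0 => l _; exact: H0.
have Hsum : forall s, \sum_k z s k * y s k = 1.
  by move=> s; rewrite (eq_bigr _ (fun k _ => Hzy s k)); exact: (Hst s).2.
have Hrec' : forall T s j, (s < T)%N -> z s j = \sum_i w s i j * z s.+1 i.
  by move=> T s j _; exact: Hzrec.
have P : forall k t j j', del * (z (t + K)%N j - z (t + K)%N j') <= (1 - del) ^+ k.
  elim=> [|k IH] t j j'.
    rewrite expr0.
    have H1 := ylow (t + K)%N j (leq_addl _ _).
    have H2 := Hzy (t + K)%N j; have H3 := Hpi1 (t + K)%N j.
    have H4 := Hz0 (t + K)%N j; have H5 := Hz0 (t + K)%N j'.
    nra.
  set T := (t + K + K)%N.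
  have HB : forall i i', z T i - z T i' <= (1 - del) ^+ k / del.
    by move=> i1 i2; rewrite ler_pdivlMr // mulrC; exact: IH.
  have Hcs := @core_spread R n E w beta L wge0 wcol wb Hb hb1 Hself Husc z T _ i0 (leq_addl _ _)
     (Hrec' T) HB j j'.
  have ET : (T - n * L = t + K)%N by rewrite /T /K addnK.
  rewrite ET in Hcs.
  have E1 : del * ((1 - del) * ((1 - del) ^+ k / del)) = (1 - del) ^+ k.+1.
    rewrite exprS; field; exact: lt0r_neq0.
  rewrite -E1; apply: ler_wpM2l => //; exact: ltW.
have Q : forall k j j', del * (z t0 j - z t0 j') <= (1 - del) ^+ k.
  move=> k j j'.
  set T := (t0 + K)%N.
  have HB : forall i i', z T i - z T i' <= (1 - del) ^+ k / del.
    by move=> i1 i2; rewrite ler_pdivlMr // mulrC; exact: P.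
  have Hcs := @core_spread R n E w beta L wge0 wcol wb Hb hb1 Hself Husc z T _ i0 (leq_addl _ _)
     (Hrec' T) HB j j'.
  have ET : (T - n * L = t0)%N by rewrite /T /K addnK.
  rewrite ET -/K -/del in Hcs.
  have HBp : 0 <= (1 - del) ^+ k / del.
    apply: divr_ge0; [apply: exprn_ge0; lra | exact: ltW].
  have E1 : del * ((1 - del) ^+ k / del) = (1 - del) ^+ k by field; exact: lt0r_neq0.
  rewrite -E1; apply: ler_wpM2l; first exact: ltW.
  nra.
have Hdiff : z t0 i - 1 = \sum_j y t0 j * (z t0 i - z t0 j).
  rewrite (eq_bigr (fun j => z t0 i * y t0 j - z t0 j * y t0 j)); last by move=> j _; ring.
  by rewrite sumrB -mulr_sumr ysum Hsum mulr1.
have U1 : z t0 i - 1 <= 0.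
  apply: (@bernoulli_contra R del _ Hd0 Hd1) => k.
  rewrite Hdiff mulr_sumr.
  have -> : (1 - del) ^+ k = \sum_j y t0 j * (1 - del) ^+ k by rewrite -mulr_suml ysum mul1r.
  apply: ler_sum => j _.
  have := Q k i j; have := ypos t0 j; nra.
have U2 : 1 - z t0 i <= 0.
  apply: (@bernoulli_contra R del _ Hd0 Hd1) => k.
  have -> : 1 - z t0 i = - (z t0 i - 1) by ring.
  rewrite Hdiff -sumrN mulr_sumr.
  have -> : (1 - del) ^+ k = \sum_j y t0 j * (1 - del) ^+ k by rewrite -mulr_suml ysum mul1r.
  apply: ler_sum => j _.
  have := Q k j i; have := ypos t0 j; nra.
have Hz1 : z t0 i = 1 by lra.
by rewrite -Hzy Hz1 mul1r.
Qed.
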